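(* For every fixed $a\in(0,1/2]$, \[ \lim_{n\to\infty}\overline{\Lambda}(n;a)=\theta(a):=\begin{cases}\frac{(1-\sqrt a)^{2}}{a}, & 0<a<\frac14,\\[2pt] \frac{1}{2a}-1, & \frac14\le a\le\frac12.\end{cases} \]
   Context: For integers $n\ge1$, $k\in[0:n]$ and real $x$, the Krawtchouk polynomial is $K_k(x)=K_k^{(n)}(x):=\sum_{j=0}^{k}(-1)^{j}\binom{x}{j}\binom{n-x}{k-j}$, with generalized binomial coefficients $\binom{x}{j}=\frac{x(x-1)\cdots(x-j+1)}{j!}$. Here $[m:n]=\{m,m+1,\dots,n\}$. For real $a\in(0,1/2]$, $\overline{\Lambda}(n;a)$ is the optimal value of the linear program: maximize $-\sum_{k=1}^{n}\left[K_k(0)+K_k(1)\left(\frac1a-1\right)\right]x_k$ over $(x_1,\dots,x_n)\in\mathbb{R}^n$ subject to $x_k\ge0$ for $k\in[1:n]$ and $\sum_{k=1}^{n}[K_k(1)-K_k(i)]x_k\ge -1$ for all $i\in[2:n]$. *)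

(* Defs.v *)
From Stdlib Require Import Reals Lra.
Open Scope R_scope.

Fixpoint gbinom (x : R) (j : nat) : R :=
  match j with
  | O => 1
  | S j' => gbinom x j' * (x - INR j') / INR (S j')
  end.

(* sum_{k=lo}^{hi} f k  (empty, i.e. 0, when hi < lo) *)
Fixpoint sumR (lo : nat) (f : nat -> R) (hi : nat) : R :=
  match hi with
  | O => if Nat.leb lo 0 then f 0%nat else 0
  | S h => sumR lo f h + (if Nat.leb lo (S h) then f (S h) else 0)
  end.

Definition kraw (n k : nat) (x : R) : R :=
  sumR 0 (fun j => (-1) ^ j * gbinom x j * gbinom (INR n - x) (k - j)) k.

(* Feasible set of the LP defining Lambda-bar(n; a); vectors indexed by 1..n *)
Definition lp_feasible (n : nat) (xv : nat -> R) : Prop :=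
  (forall k, (1 <= k <= n)%nat -> 0 <= xv k) /\
  (forall i, (2 <= i <= n)%nat ->
     sumR 1 (fun k => (kraw n k 1 - kraw n k (INR i)) * xv k) n >= -1).

Definition lp_obj (n : nat) (a : R) (xv : nat -> R) : R :=
  - sumR 1 (fun k => (kraw n k 0 + kraw n k 1 * (1 / a - 1)) * xv k) n.

(* The set of objective values attained on feasible points; its supremum
   (when finite) is Lambda-bar(n; a). *)
Definition lp_values (n : nat) (a : R) : R -> Prop :=
  fun v => exists xv, lp_feasible n xv /\ v = lp_obj n a xv.

Definition LambdaBar_is (n : nat) (a L : R) : Prop := is_lub (lp_values n a) L.

Definition theta (a : R) : R :=
  if Rlt_dec a (1/4) then (1 - sqrt a) ^ 2 / a else 1 / (2 * a) - 1.

(* Main.v *)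
Require Import Defs.
From Stdlib Require Import Reals Lra Lia Psatz ZArith.
Open Scope R_scope.

Lemma sumR_ext lo f g hi : (forall k, (lo <= k <= hi)%nat -> f k = g k) -> sumR lo f hi = sumR lo g hi.
Proof.
  induction hi; intros H; simpl.
  - destruct (Nat.leb lo 0) eqn:E; [apply Nat.leb_le in E; apply H; lia| reflexivity].
  - rewrite IHhi by (intros; apply H; lia).
    destruct (Nat.leb lo (S hi)) eqn:E; [apply Nat.leb_le in E; rewrite H by lia|]; reflexivity.
Qed.

Lemma sumR_plus lo f g hi : sumR lo (fun k => f k + g k) hi = sumR lo f hi + sumR lo g hi.
Proof.
  induction hi; simpl.
  - destruct (Nat.leb lo 0); lra.
  - rewrite IHhi. destruct (Nat.leb lo (S hi)); lra.
Qed.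

Lemma sumR_scal lo c f hi : sumR lo (fun k => c * f k) hi = c * sumR lo f hi.
Proof.
  induction hi; simpl.
  - destruct (Nat.leb lo 0); lra.
  - rewrite IHhi. destruct (Nat.leb lo (S hi)); lra.
Qed.

Lemma sumR_minus lo f g hi : sumR lo (fun k => f k - g k) hi = sumR lo f hi - sumR lo g hi.
Proof.
  induction hi; simpl.
  - destruct (Nat.leb lo 0); lra.
  - rewrite IHhi. destruct (Nat.leb lo (S hi)); lra.
Qed.

Lemma sumR_nonneg lo f hi : (forall k, (lo <= k <= hi)%nat -> 0 <= f k) -> 0 <= sumR lo f hi.
Proof.
  induction hi; intros H; simpl.
  - destruct (Nat.leb lo 0) eqn:E; [apply Nat.leb_le in E; apply H; lia| lra].
  - assert (0 <= sumR lo f hi) by (apply IHhi; intros; apply H; lia).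
    destruct (Nat.leb lo (S hi)) eqn:E; [apply Nat.leb_le in E; specialize (H (S hi)); assert (0 <= f (S hi)) by (apply H; lia)|]; lra.
Qed.

Lemma sumR0_S f h : sumR 0 f (S h) = sumR 0 f h + f (S h).
Proof. reflexivity. Qed.

Lemma sumR0_0 f : sumR 0 f 0 = f 0%nat.
Proof. reflexivity. Qed.

Lemma sumR_shift f N : sumR 0 f (S N) = f 0%nat + sumR 0 (fun k => f (S k)) N.
Proof.
  induction N.
  - reflexivity.
  - rewrite sumR0_S, IHN, sumR0_S. lra.
Qed.

Lemma sumR1_split f n : sumR 0 f n = f 0%nat + sumR 1 f n.
Proof.
  induction n.
  - simpl. lra.
  - rewrite sumR0_S, IHn. simpl. lra.
Qed.

Lemma sumR_zero f hi : (forall k, (k <= hi)%nat -> f k = 0) -> sumR 0 f hi = 0.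
Proof.
  induction hi; intros H.
  - rewrite sumR0_0. apply H; lia.
  - rewrite sumR0_S, IHhi, H by (try intros; try apply H; lia). lra.
Qed.

Lemma sumR_upto2 f hi : (2 <= hi)%nat -> (forall k, (3 <= k <= hi)%nat -> f k = 0) ->
  sumR 0 f hi = f 0%nat + f 1%nat + f 2%nat.
Proof.
  induction hi; intros Hh H; [lia|].
  destruct (Nat.eq_dec hi 1) as [->|Hne].
  - reflexivity.
  - rewrite sumR0_S, IHhi by (try intros; try apply H; lia). rewrite (H (S hi)) by lia. lra.
Qed.

Lemma gbinom_S x j : gbinom x (S j) = gbinom x j * (x - INR j) / INR (S j).
Proof. reflexivity. Qed.

Lemma gbinom_pascal x j : gbinom (x+1) (S j) = gbinom x (S j) + gbinom x j.
Proof.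
  induction j.
  - simpl. field.
  - rewrite gbinom_S, IHj, !gbinom_S. rewrite !S_INR.
    assert (0 <= INR j) by apply pos_INR. field. lra.
Qed.

Lemma gbinom_I1 x j : gbinom (x-1) j * x = gbinom x j * (x - INR j).
Proof.
  induction j.
  - simpl. ring.
  - rewrite !gbinom_S. rewrite S_INR.
    assert (0 <= INR j) by apply pos_INR.
    replace (gbinom (x - 1) j * (x - 1 - INR j) / (INR j + 1) * x)
      with (gbinom (x - 1) j * x * (x - 1 - INR j) / (INR j + 1)) by (field; lra).
    rewrite IHj. field. lra.
Qed.

Lemma gbinom_I2 x j : gbinom (x-1) j * x = gbinom x (S j) * INR (S j).
Proof.
  rewrite gbinom_I1, gbinom_S. rewrite S_INR.
  assert (0 <= INR j) by apply pos_INR. field. lra.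
Qed.

Lemma gbinom_nat_zero i j : (i < j)%nat -> gbinom (INR i) j = 0.
Proof.
  induction j; intros H; [lia|].
  rewrite gbinom_S. destruct (Nat.eq_dec i j) as [->|Hne].
  - unfold Rdiv. rewrite Rminus_diag. ring.
  - rewrite IHj by lia. unfold Rdiv. ring.
Qed.

Lemma gbinom_nat_nonneg n k : (k <= n)%nat -> 0 <= gbinom (INR n) k.
Proof.
  induction k; intros H.
  - simpl; lra.
  - rewrite gbinom_S. apply Rmult_le_pos; [apply Rmult_le_pos|].
    + apply IHk; lia.
    + apply le_INR in H. rewrite S_INR in H. lra.
    + left. apply Rinv_0_lt_compat. apply lt_0_INR. lia.
Qed.

Definition Pk (x y : R) (k : nat) : R :=
  sumR 0 (fun j => (-1) ^ j * gbinom x j * gbinom y (k - j)) k.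

Lemma kraw_Pk n k x : kraw n k x = Pk x (INR n - x) k.
Proof. reflexivity. Qed.

Lemma Pk_0 x y : Pk x y 0 = 1.
Proof. unfold Pk. simpl. ring. Qed.

Lemma P_y_rec x y k : Pk x (y+1) (S k) = Pk x y (S k) + Pk x y k.
Proof.
  unfold Pk. rewrite !sumR0_S.
  rewrite (sumR_ext 0 (fun j => (-1) ^ j * gbinom x j * gbinom (y + 1) (S k - j))
     (fun j => (-1) ^ j * gbinom x j * gbinom y (S k - j) + (-1) ^ j * gbinom x j * gbinom y (k - j))).
  2:{ intros j Hj. replace (S k - j)%nat with (S (k - j)) by lia.
      rewrite gbinom_pascal. ring. }
  rewrite sumR_plus. rewrite Nat.sub_diag. simpl gbinom. ring.
Qed.

Lemma P_x_rec x y k : Pk (x+1) y (S k) = Pk x y (S k) - Pk x y k.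
Proof.
  unfold Pk. rewrite !sumR_shift.
  rewrite (sumR_ext 0 (fun k0 => (-1) ^ S k0 * gbinom (x + 1) (S k0) * gbinom y (S k - S k0))
     (fun j => (-1) ^ S j * gbinom x (S j) * gbinom y (k - j) - (-1) ^ j * gbinom x j * gbinom y (k - j))).
  2:{ intros j Hj. replace (S k - S j)%nat with (k - j)%nat by lia.
      rewrite gbinom_pascal. simpl pow. ring. }
  rewrite (sumR_ext 0 (fun k0 => (-1) ^ S k0 * gbinom x (S k0) * gbinom y (S k - S k0))
     (fun j => (-1) ^ S j * gbinom x (S j) * gbinom y (k - j))).
  2:{ intros j Hj. replace (S k - S j)%nat with (k - j)%nat by lia. reflexivity. }
  rewrite sumR_minus. simpl. ring.
Qed.

Lemma gbinom_zero_S j : gbinom 0 (S j) = 0.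
Proof. apply (gbinom_nat_zero 0). lia. Qed.

Definition Qg (N : nat) (x y z : R) : R := sumR 0 (fun k => Pk x y k * z ^ k) N.

Lemma Q_y N x y z : Qg (S N) x (y+1) z = Qg (S N) x y z + z * Qg N x y z.
Proof.
  unfold Qg. rewrite !sumR_shift, !Pk_0.
  rewrite (sumR_ext 0 (fun k => Pk x (y + 1) (S k) * z ^ S k)
     (fun k => Pk x y (S k) * z ^ S k + z * (Pk x y k * z ^ k))).
  2:{ intros j Hj. rewrite P_y_rec. simpl pow. ring. }
  rewrite sumR_plus, sumR_scal. simpl. ring.
Qed.

Lemma Q_x N x y z : Qg (S N) (x+1) y z = Qg (S N) x y z - z * Qg N x y z.
Proof.
  unfold Qg. rewrite !sumR_shift, !Pk_0.
  rewrite (sumR_ext 0 (fun k => Pk (x+1) y (S k) * z ^ S k)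
     (fun k => Pk x y (S k) * z ^ S k - z * (Pk x y k * z ^ k))).
  2:{ intros j Hj. rewrite P_x_rec. simpl pow. ring. }
  rewrite sumR_minus, sumR_scal. simpl. ring.
Qed.

Lemma Q00 N z : Qg N 0 0 z = 1.
Proof.
  unfold Qg. destruct N.
  - simpl. unfold Pk. simpl. ring.
  - rewrite sumR_shift, Pk_0.
    rewrite sumR_zero. ring.
    intros k _. unfold Pk. rewrite sumR_shift.
    rewrite sumR_zero. simpl (S k - 0)%nat. rewrite gbinom_zero_S. ring.
    intros j _. rewrite gbinom_zero_S. ring.
Qed.

Lemma Q_nat z m : forall i N, (i + m <= N)%nat -> Qg N (INR i) (INR m) z = (1-z)^i * (1+z)^m.
Proof.
  induction m; intros i.
  - induction i; intros N H.
    + simpl. rewrite Q00. ring.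
    + destruct N as [|N]; [lia|].
      rewrite S_INR, Q_x, !IHi by lia. simpl. ring.
  - intros N H. destruct N as [|N]; [lia|].
    rewrite S_INR, Q_y, !IHm by lia. simpl. ring.
Qed.

Lemma kraw_gen n i z : (i <= n)%nat ->
  sumR 0 (fun k => kraw n k (INR i) * z ^ k) n = (1-z)^i * (1+z)^(n-i).
Proof.
  intros H. rewrite <- (Q_nat z (n-i) i n) by lia. unfold Qg.
  apply sumR_ext. intros k _. rewrite kraw_Pk, minus_INR by lia. reflexivity.
Qed.

Lemma kraw_n0 n x : kraw n 0 x = 1.
Proof. unfold kraw. simpl. ring. Qed.

Lemma kraw_0 n k : kraw n k 0 = gbinom (INR n) k.
Proof.
  unfold kraw. destruct k.
  - simpl. replace (INR n - 0) with (INR n) by ring. ring.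
  - rewrite sumR_shift. rewrite sumR_zero.
    + simpl pow. replace (INR n - 0) with (INR n) by ring. simpl (S k - 0)%nat. simpl gbinom. ring.
    + intros j _. rewrite gbinom_zero_S. ring.
Qed.

Lemma gbinom_one_SS j : gbinom 1 (S (S j)) = 0.
Proof. apply (gbinom_nat_zero 1). lia. Qed.

Lemma gbinom_two_SSS j : gbinom 2 (S (S (S j))) = 0.
Proof. replace 2 with (INR 2) by (simpl; lra). apply (gbinom_nat_zero 2). lia. Qed.

Lemma kraw_1 n k : (1 <= k)%nat ->
  INR n * kraw n k 1 = gbinom (INR n) k * (INR n - 2 * INR k).
Proof.
  intros Hk. destruct k as [|j]; [lia|].
  unfold kraw. rewrite sumR_shift.
  destruct j as [|j].
  - simpl. field.
  - rewrite sumR_shift. rewrite sumR_zero.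
    2:{ intros i _. rewrite gbinom_one_SS. ring. }
    simpl pow. simpl (S (S j) - 0)%nat. simpl (S (S j) - 1)%nat.
    replace (gbinom 1 0) with 1 by reflexivity.
    replace (gbinom 1 1) with 1 by (simpl; field).
    transitivity (gbinom (INR n - 1) (S (S j)) * INR n - gbinom (INR n - 1) (S j) * INR n).
    + ring.
    + rewrite gbinom_I1, gbinom_I2. rewrite !S_INR. ring.
Qed.

Lemma kraw_2 n k : (1 <= k)%nat ->
  INR n * (INR n - 1) * kraw n k 2 = gbinom (INR n) k * ((INR n - 2 * INR k)^2 - INR n).
Proof.
  intros Hk. set (x := INR n).
  assert (E1 : forall j, gbinom (x - 2) j * (x * (x-1)) = gbinom x j * (x - INR j) * (x - 1 - INR j)).
  { intros j. replace (x-2) with (x-1-1) by ring.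
    replace (gbinom (x - 1 - 1) j * (x * (x - 1))) with (gbinom (x - 1 - 1) j * (x - 1) * x) by ring.
    rewrite gbinom_I1. replace (gbinom (x - 1) j * (x - 1 - INR j) * x) with (gbinom (x - 1) j * x * (x - 1 - INR j)) by ring.
    rewrite gbinom_I1. ring. }
  assert (E2 : forall j, gbinom (x - 2) j * (x * (x-1)) = gbinom x (S j) * INR (S j) * (x - INR (S j))).
  { intros j. replace (x-2) with (x-1-1) by ring.
    replace (gbinom (x - 1 - 1) j * (x * (x - 1))) with (gbinom (x - 1 - 1) j * (x - 1) * x) by ring.
    rewrite gbinom_I2. replace (gbinom (x - 1) (S j) * INR (S j) * x) with (gbinom (x - 1) (S j) * x * INR (S j)) by ring.
    rewrite gbinom_I1. ring. }
  assert (E3 : forall j, gbinom (x - 2) j * (x * (x-1)) = gbinom x (S (S j)) * INR (S (S j)) * INR (S j)).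
  { intros j. replace (x-2) with (x-1-1) by ring.
    replace (gbinom (x - 1 - 1) j * (x * (x - 1))) with (gbinom (x - 1 - 1) j * (x - 1) * x) by ring.
    rewrite gbinom_I2. replace (gbinom (x - 1) (S j) * INR (S j) * x) with (gbinom (x - 1) (S j) * x * INR (S j)) by ring.
    rewrite gbinom_I2. ring. }
  destruct k as [|j]; [lia|].
  unfold kraw. fold x.
  destruct j as [|j].
  - simpl sumR. simpl pow. simpl (1 - 0)%nat. simpl (1-1)%nat.
    replace (gbinom 2 0) with 1 by reflexivity.
    replace (gbinom 2 1) with 2 by (simpl; field).
    replace (gbinom (x - 2) 0) with 1 by reflexivity.
    simpl gbinom. simpl INR. field.
  - rewrite sumR_upto2 by (try intros i Hi; try (destruct i as [|[|[|i]]]; [lia|lia|lia| rewrite gbinom_two_SSS; ring]); lia).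
    cbn [pow]. simpl (S (S j) - 0)%nat. simpl (S (S j) - 1)%nat. simpl (S (S j) - 2)%nat.
    replace (gbinom 2 0) with 1 by reflexivity.
    replace (gbinom 2 1) with 2 by (simpl; field).
    replace (gbinom 2 2) with 1 by (simpl; field).
    transitivity (gbinom (x - 2) (S (S j)) * (x * (x-1)) - 2 * (gbinom (x - 2) (S j) * (x * (x-1)))
       + gbinom (x - 2) j * (x * (x-1))).
    + rewrite Nat.sub_0_r. ring.
    + rewrite E1, E2, E3. rewrite !S_INR. ring.
Qed.

Lemma dual_ub n a p xv : (2 <= n)%nat -> 0 <= p ->
  (forall k, (1 <= k <= n)%nat -> 0 <= kraw n k 0 + (1/a - 1 - p) * kraw n k 1 + p * kraw n k 2) ->
  lp_feasible n xv -> lp_obj n a xv <= p.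
Proof.
  intros Hn Hp Hd [Hx Hc].
  specialize (Hc 2%nat ltac:(lia)).
  replace (INR 2) with 2 in Hc by (simpl; lra).
  unfold lp_obj.
  rewrite (sumR_ext 1 (fun k => (kraw n k 0 + kraw n k 1 * (1 / a - 1)) * xv k)
    (fun k => (kraw n k 0 + (1/a - 1 - p) * kraw n k 1 + p * kraw n k 2) * xv k
              + p * ((kraw n k 1 - kraw n k 2) * xv k))).
  2:{ intros; cbv beta; ring. }
  rewrite sumR_plus, sumR_scal.
  assert (0 <= sumR 1 (fun k => (kraw n k 0 + (1/a - 1 - p) * kraw n k 1 + p * kraw n k 2) * xv k) n).
  { apply sumR_nonneg. intros k Hk. apply Rmult_le_pos; [apply Hd; lia| apply Hx; lia]. }
  nra.
Qed.

Lemma dual_cond n c p : (2 <= n)%nat ->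
  (forall k, (1 <= k <= n)%nat ->
     0 <= INR n * (INR n - 1) + c * (INR n - 1) * (INR n - 2 * INR k) + p * ((INR n - 2 * INR k)^2 - INR n)) ->
  forall k, (1 <= k <= n)%nat -> 0 <= kraw n k 0 + c * kraw n k 1 + p * kraw n k 2.
Proof.
  intros Hn HB k Hk.
  assert (Hn2 : 2 <= INR n) by (replace 2 with (INR 2) by (simpl; lra); apply le_INR; lia).
  pose proof (kraw_1 n k ltac:(lia)) as E1.
  pose proof (kraw_2 n k ltac:(lia)) as E2.
  rewrite kraw_0.
  pose proof (gbinom_nat_nonneg n k ltac:(lia)) as HG.
  specialize (HB k Hk).
  set (G := gbinom (INR n) k) in *.
  set (x := INR n) in *.
  assert (E : x * (x - 1) * (G + c * kraw n k 1 + p * kraw n k 2) =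
     G * (x * (x - 1) + c * (x - 1) * (x - 2 * INR k) + p * ((x - 2 * INR k) ^ 2 - x))).
  { transitivity (x * (x-1) * G + c * (x - 1) * (x * kraw n k 1) + p * (x * (x - 1) * kraw n k 2)); [ring|].
    rewrite E1, E2. ring. }
  assert (0 <= G * (x * (x - 1) + c * (x - 1) * (x - 2 * INR k) + p * ((x - 2 * INR k) ^ 2 - x)))
    by (apply Rmult_le_pos; auto).
  assert (0 < x * (x-1)) by nra.
  nra.
Qed.

Lemma pow_le1 s k : 0 <= s <= 1 -> s ^ k <= 1.
Proof.
  intros Hs. induction k; simpl; [lra|].
  assert (0 <= s ^ k) by (apply pow_le; lra). nra.
Qed.

Lemma primal n a s : (1 <= n)%nat -> 0 < a < 1 -> 0 < s < 1 ->
  exists v, lp_values n a v /\ ((1/a - 1) * s - 1) / (s + s^2) <= v.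
Proof.
  intros Hn Ha Hs.
  set (m := 1/a - 1).
  assert (Hm : 0 < m) by (unfold m; apply Rlt_Rminus; unfold Rdiv; rewrite Rmult_1_l;
                         rewrite <- Rinv_1; apply Rinv_lt_contravar; lra).
  set (z := (1+s)/(1-s)).
  assert (Hz : 0 < z) by (unfold z; apply Rdiv_lt_0_compat; lra).
  set (w := 1/(s+s^2)).
  assert (Hw : 0 < w) by (unfold w; apply Rdiv_lt_0_compat; nra).
  assert (Hzn : 0 < (1+z)^n) by (apply pow_lt; lra).
  set (t := w / (1+z)^n).
  assert (Ht : 0 < t) by (unfold t; apply Rdiv_lt_0_compat; lra).
  set (xv := fun k => t * z ^ k).
  assert (HF : forall i, (i <= n)%nat ->
     sumR 1 (fun k => kraw n k (INR i) * xv k) n = w * (-s)^i - t).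
  { intros i Hi.
    assert (H0 := sumR1_split (fun k => kraw n k (INR i) * xv k) n).
    cbv beta in H0. rewrite kraw_n0 in H0. unfold xv in H0.
    rewrite (sumR_ext 0 (fun k => kraw n k (INR i) * (t * z ^ k)) (fun k => t * (kraw n k (INR i) * z ^ k))) in H0
      by (intros; cbv beta; ring).
    rewrite sumR_scal, kraw_gen in H0 by lia.
    unfold xv. simpl pow in H0.
    assert (E : 1 - z = (-s) * (1 + z)) by (unfold z; field; lra).
    rewrite E, Rpow_mult_distr in H0.
    rewrite Rmult_assoc, <- pow_add in H0.
    replace (i + (n - i))%nat with n in H0 by lia.
    assert (E2 : t * ((-s) ^ i * (1 + z) ^ n) = w * (-s)^i) by (unfold t; field; lra).
    lra. }
  exists (lp_obj n a xv). split.
  - exists xv. split; [|reflexivity]. split.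
    + intros k _. unfold xv. apply Rmult_le_pos; [lra| apply pow_le; lra].
    + intros i Hi.
      rewrite (sumR_ext 1 _ (fun k => kraw n k (INR 1) * xv k - kraw n k (INR i) * xv k))
        by (intros; cbv beta; simpl INR; ring).
      rewrite sumR_minus, !HF by lia.
      assert (Hp : (-s)^i <= s^2).
      { eapply Rle_trans; [apply Rle_abs|]. rewrite <- RPow_abs.
        replace (Rabs (-s)) with s by (rewrite Rabs_Ropp, Rabs_right; lra).
        replace i with (2 + (i-2))%nat by lia. rewrite pow_add.
        assert (s^(i-2) <= 1) by (apply pow_le1; lra).
        assert (0 <= s^(i-2)) by (apply pow_le; lra). nra. }
      simpl pow.
      assert (w * (s + s^2) = 1) by (unfold w; field; nra).
      nra.
  - unfold lp_obj.
    rewrite (sumR_ext 1 _ (fun k => kraw n k (INR 0) * xv k + m * (kraw n k (INR 1) * xv k)))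
        by (intros; cbv beta; simpl INR; unfold m; ring).
    rewrite sumR_plus, sumR_scal, !HF by lia.
    rewrite pow_O, pow_1.
    assert (w * (s + s^2) = 1) by (unfold w; field; nra).
    assert ((m * s - 1) / (s + s^2) = w * (m*s - 1)) by (unfold w; field; nra).
    fold m. rewrite H0. nra.
Qed.

Lemma nat_arch r : exists N : nat, r < INR N.
Proof.
  destruct (archimed r) as [H1 _].
  destruct (Z_lt_le_dec (up r) 0) as [Hl|Hl].
  - exists 0%nat. simpl. apply IZR_lt in Hl. lra.
  - exists (Z.to_nat (up r)). rewrite INR_IZR_INZ, Z2Nat.id by lia. lra.
Qed.

Lemma assemble a th :
  (forall eps, 0 < eps -> forall n, (2 <= n)%nat -> exists v, lp_values n a v /\ th - eps < v) ->
  (forall eps, 0 < eps -> exists N, forall n, (N <= n)%nat -> forall v, lp_values n a v -> v <= th + eps) ->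
  exists (N : nat) (L : nat -> R),
    (forall n, (N <= n)%nat -> LambdaBar_is n a (L n)) /\ Un_cv L th.
Proof.
  intros Hlo Hup.
  destruct (Hup 1 ltac:(lra)) as [N1 HN1].
  set (N := Nat.max 2 N1).
  assert (Hb : forall n, (N <= n)%nat -> bound (lp_values n a)).
  { intros n Hn. exists (th + 1). intros v Hv. apply (HN1 n); [lia|exact Hv]. }
  assert (Hne : forall n, (N <= n)%nat -> exists x, lp_values n a x).
  { intros n Hn. destruct (Hlo 1 ltac:(lra) n ltac:(lia)) as [v [Hv _]]. now exists v. }
  exists N, (fun n => match le_lt_dec N n with
                      | left H => proj1_sig (completeness _ (Hb n H) (Hne n H))
                      | right _ => 0 end).
  assert (HL : forall n, (N <= n)%nat -> LambdaBar_is n a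
      (match le_lt_dec N n with
                      | left H => proj1_sig (completeness _ (Hb n H) (Hne n H))
                      | right _ => 0 end)).
  { intros n Hn. destruct (le_lt_dec N n) as [H|H]; [|lia].
    unfold LambdaBar_is. apply (proj2_sig (completeness _ (Hb n H) (Hne n H))). }
  split; [exact HL|].
  intros eps Heps.
  destruct (Hup (eps/2) ltac:(lra)) as [N2 HN2].
  exists (Nat.max N N2). intros n Hn.
  specialize (HL n ltac:(lia)).
  set (l := match le_lt_dec N n with
                      | left H => proj1_sig (completeness _ (Hb n H) (Hne n H))
                      | right _ => 0 end) in *.
  destruct HL as [Hub Hleast].
  assert (l <= th + eps/2).
  { apply Hleast. intros v Hv. apply (HN2 n); [lia|exact Hv]. }
  destruct (Hlo (eps/2) ltac:(lra) n ltac:(lia)) as [v [Hv Hv2]].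
  assert (v <= l) by (apply Hub; exact Hv).
  unfold R_dist. apply Rabs_def1; lra.
Qed.

Lemma caseB a : 1/4 <= a -> a <= 1/2 ->
  exists (N : nat) (L : nat -> R),
    (forall n, (N <= n)%nat -> LambdaBar_is n a (L n)) /\ Un_cv L (1/(2*a) - 1).
Proof.
  intros Ha1 Ha2.
  set (b := 1/(2*a)).
  assert (Hb1 : 1 <= b) by (unfold b; apply (Rmult_le_reg_r (2*a)); [lra|]; field_simplify; lra).
  assert (Hb2 : b <= 2) by (unfold b; apply (Rmult_le_reg_r (2*a)); [lra|]; field_simplify; lra).
  assert (Hm : 1/a - 1 = 2*b - 1) by (unfold b; field; lra).
  apply assemble.
  - intros eps Heps n Hn.
    set (s := 1 - Rmin (1/2) (eps/4)).
    assert (Hmin1 : Rmin (1/2) (eps/4) <= 1/2) by apply Rmin_l.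
    assert (Hmin2 : Rmin (1/2) (eps/4) <= eps/4) by apply Rmin_r.
    assert (Hmin3 : 0 < Rmin (1/2) (eps/4)) by (apply Rmin_glb_lt; lra).
    destruct (primal n a s ltac:(lia) ltac:(lra) ltac:(unfold s; lra)) as [v [Hv Hv2]].
    exists v. split; [exact Hv|].
    rewrite Hm in Hv2.
    assert (Hs1 : 1/2 <= s) by (unfold s; lra).
    assert (Hs2 : s < 1) by (unfold s; lra).
    assert (Hf : b - 1 - 2*(1-s) <= ((2*b-1)*s - 1)/(s + s^2)).
    { apply (Rmult_le_reg_r (s + s^2)); [nra|].
      unfold Rdiv. rewrite Rmult_assoc, Rinv_l by nra. rewrite Rmult_1_r.
      assert (((2*b-1)*s - 1) - (b - 1 - 2*(1-s))*(s+s^2) = (1-s)*((b-1)*s - 1 + 2*s*(1+s))) by ring.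
      assert (0 <= (1-s)*((b-1)*s - 1 + 2*s*(1+s))) by (apply Rmult_le_pos; nra).
      lra. }
    assert (1 - s <= eps/4) by (unfold s; lra).
    lra.
  - intros eps Heps. exists 2%nat. intros n Hn v [xv [Hf ->]].
    assert (lp_obj n a xv <= b - 1); [|lra].
    apply dual_ub; [lia|lra| |exact Hf].
    apply dual_cond; [lia|].
    intros k Hk.
    rewrite Hm.
    assert (Hx : 2 <= INR n) by (replace 2 with (INR 2) by (simpl; lra); apply le_INR; lia).
    assert (Hk1 : 1 <= INR k) by (replace 1 with (INR 1) by reflexivity; apply le_INR; lia).
    assert (Hk2 : INR k <= INR n) by (apply le_INR; lia).
    set (x := INR n) in *. set (kk := INR k) in *.
    assert (E : x * (x - 1) + (2 * b - 1 - (b - 1)) * (x - 1) * (x - 2 * kk) + (b - 1) * ((x - 2 * kk) ^ 2 - x)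
       = 2 * (x - kk) * ((b - 1) * (x - 2*kk) + x - 1 - (b-1))) by ring.
    rewrite E.
    destruct (Nat.eq_dec k n) as [->|Hne].
    + unfold kk. fold x. replace (x - x) with 0 by ring. lra.
    + assert (Hk3 : kk <= x - 1).
      { unfold kk, x. assert (INR k <= INR (n - 1)) by (apply le_INR; lia).
        rewrite minus_INR in H by lia. simpl INR in H. lra. }
      apply Rmult_le_pos; [lra|]. nra.
Qed.

Lemma caseA a : 0 < a -> a < 1/4 ->
  exists (N : nat) (L : nat -> R),
    (forall n, (N <= n)%nat -> LambdaBar_is n a (L n)) /\ Un_cv L ((1 - sqrt a)^2 / a).
Proof.
  intros Ha0 Ha1.
  set (q := sqrt a).
  assert (Hq0 : 0 < q) by (apply sqrt_lt_R0; lra).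
  assert (Hqq : q * q = a) by (apply sqrt_sqrt; lra).
  assert (Hq1 : q < 1/2) by nra.
  set (T := (1 - q)/q).
  assert (HT : 1 < T) by (unfold T; apply (Rmult_lt_reg_r q); [lra|]; field_simplify; lra).
  assert (Hth : (1 - q)^2 / a = T^2) by (unfold T; rewrite <- Hqq; field; lra).
  assert (Hm : 1/a - 1 = T^2 + 2*T) by (unfold T; rewrite <- Hqq; field; lra).
  rewrite Hth.
  apply assemble.
  - intros eps Heps n Hn.
    destruct (primal n a (1/T) ltac:(lia) ltac:(lra)) as [v [Hv Hv2]].
    { split; [apply Rdiv_lt_0_compat; lra|]. apply (Rmult_lt_reg_r T); [lra|]. field_simplify; lra. }
    exists v. split; [exact Hv|].
    rewrite Hm in Hv2.
    replace (((T ^ 2 + 2 * T) * (1 / T) - 1) / (1 / T + (1 / T) ^ 2)) with (T^2) in Hv2 by (field; lra).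
    lra.
  - intros eps Heps.
    set (e := Rmin 1 eps).
    assert (He1 : e <= 1) by apply Rmin_l.
    assert (He2 : e <= eps) by apply Rmin_r.
    assert (He0 : 0 < e) by (apply Rmin_glb_lt; lra).
    set (p := T^2 + e).
    assert (Hp : 1 < p) by (unfold p; nra).
    set (dl := e * (4*T + 3)).
    assert (Hdl : 0 < dl) by (unfold dl; nra).
    destruct (nat_arch (8 * p^2 / dl)) as [N0 HN0].
    exists (N0 + 2)%nat. intros n Hn v [xv [Hf ->]].
    assert (lp_obj n a xv <= p); [|unfold p in *; lra].
    apply dual_ub; [lia|lra| |exact Hf].
    apply dual_cond; [lia|].
    intros k Hk.
    assert (Hx : INR N0 + 2 <= INR n) by (replace 2 with (INR 2) by (simpl; lra); rewrite <- plus_INR; apply le_INR; lia).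
    set (x := INR n) in *. set (kk := INR k) in *.
    set (y := x - 1). set (d := x - 2 * kk).
    assert (Hy : 1 <= y) by (unfold y; pose proof (pos_INR N0); lra).
    assert (Hy2 : 8 * p^2 <= dl * y).
    { assert (8 * p^2 / dl < y) by (unfold y; lra).
      assert (8*p^2 = (8*p^2/dl)*dl) by (field; lra).
      nra. }
    rewrite Hm.
    set (c := T^2 + 2*T - p).
    assert (Hc : c^2 = 4*p - e*(4 + 4*T - e)) by (unfold c, p; ring).
    assert (HR : 0 <= 4*p*x*(y - p) - c^2 * y^2).
    { rewrite Hc. replace x with (y + 1) by (unfold y; ring).
      assert (e*(4+4*T-e) >= dl) by (unfold dl; nra).
      assert (dl * y^2 >= 8*p^2*y) by nra.
      assert (e*(4+4*T-e) * y^2 >= dl * y^2) by nra.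
      nra. }
    assert (E : 4*p*(x*y + c*y*d + p*(d^2 - x)) = (2*p*d + c*y)^2 + (4*p*x*(y - p) - c^2*y^2)) by ring.
    assert (0 <= x*y + c*y*d + p*(d^2 - x)).
    { assert (0 <= 4*p*(x*y + c*y*d + p*(d^2 - x))) by (rewrite E; apply Rplus_le_le_0_compat; [apply pow2_ge_0 | exact HR]).
      apply (Rmult_le_reg_l (4*p)); [lra|]. rewrite Rmult_0_r. exact H. }
    assumption.
Qed.

Theorem theorem2 (a : R) (ha0 : 0 < a) (ha1 : a <= 1/2) :
  exists (N : nat) (L : nat -> R),
    (forall n, (N <= n)%nat -> LambdaBar_is n a (L n)) /\
    Un_cv L (theta a).
Proof.
  unfold theta. destruct (Rlt_dec a (1/4)) as [H|H].
  - apply caseA; lra.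
  - apply caseB; lra.
Qed.
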